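(* For every prime $p$ and every integer $k$ with $1\le k\le p$, \[ \overline{M}_k(p)=p\,f_k(p)-f_k(1)+\sum_{j=2}^{p} f_k\!\left(\left\lfloor \frac{p}{j}\right\rfloor\right). \]
   Context: For a nonempty finite set $A$ of positive integers, $(A)$ denotes the greatest common divisor of the elements of $A$. For $m,k\in\mathbb{N}$, $f_k(m)$ is the number of $k$-element subsets $A\subseteq\{1,2,\ldots,m\}$ with $(A)=1$ (so $f_k(m)=0$ if $m<k$). For $1\le k\le n$, \[ \overline{M}_k(n)=\sum_{\substack{A\subseteq\{1,\ldots,n\},\ \#A=k\\ \gcd((A),n)=1}}\gcd((A)-1,n), \] with the convention $\gcd(0,n)=n$. *)

(* Defs.v *)
From mathcomp Require Import all_boot all_order all_algebra.
Set Implicit Arguments. Unset Strict Implicit. Unset Printing Implicit Defensive.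

(* Subsets of {1,...,m} are represented as sets A : {set 'I_m.+1} with 0 \notin A. *)

(* gcd (A) of the elements of a finite set of naturals (gcd of the empty set is 0). *)
Definition setgcd (m : nat) (A : {set 'I_m.+1}) : nat := \big[gcdn/0]_(x in A) val x.

Definition posset (m : nat) (A : {set 'I_m.+1}) : bool := (ord0 \notin A).

Definition fk (k m : nat) : nat :=
  #|[set A : {set 'I_m.+1} | [&& posset A, #|A| == k & setgcd A == 1]]|.

(* \overline{M}_k(n); gcdn 0 n = n realizes the convention gcd(0,n)=n *)
Definition Mbar (k n : nat) : nat :=
  \sum_(A : {set 'I_n.+1} | [&& posset A, #|A| == k & coprime (setgcd A) n])
     gcdn (setgcd A).-1 n.

(* Main.v *)
Require Import Defs.
From mathcomp Require Import all_boot all_order all_algebra.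
From mathcomp Require Import zify.

Lemma setgcd_dvd n (A : {set 'I_n.+1}) a : a \in A -> setgcd A %| val a.
Proof. by move=> aA; rewrite /setgcd (bigD1 a) //= dvdn_gcdl. Qed.

Lemma count_gcd n d k : 0 < d ->
  #|[set A : {set 'I_n.+1} | [&& posset A, #|A| == k & setgcd A == d]]| = fk k (n %/ d).
Proof.
move=> d0; set m := n %/ d.
pose g (x : 'I_m.+1) : 'I_n.+1 := inord (x * d).
have gv x : val (g x) = x * d.
  rewrite /g /= inordK // ltnS (leq_trans _ (leq_divM n d)) // leq_mul2r.
  by rewrite -ltnS ltn_ord orbT.
have ginj : injective g.
  move=> x y /(congr1 val); rewrite !gv => /eqP; rewrite eqn_mul2r gtn_eqF //=.
  by move=> /eqP /val_inj.
have g0 : g ord0 = ord0 by apply: val_inj; rewrite gv.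
have Pg (B : {set 'I_m.+1}) : posset (g @: B) = posset B.
  by rewrite /posset -g0 (mem_imset _ _ ginj).
have Sg (B : {set 'I_m.+1}) : setgcd (g @: B) = setgcd B * d.
  rewrite /setgcd big_imset /=; last by move=> x y _ _; apply: ginj.
  under eq_bigr do rewrite gv.
  by rewrite (big_morph (fun x => x * d) (fun a b => muln_gcdl a b d) (mul0n d)).
rewrite /fk -(card_imset _ (imset_inj ginj)); apply: eq_card => A.
rewrite inE; apply/idP/imsetP.
- case/and3P => PA /eqP cA /eqP sA.
  set B := [set x | g x \in A].
  have eA : A = g @: B.
    apply/setP=> a; apply/idP/imsetP.
    + move=> aA; have := setgcd_dvd _ _ _ aA; rewrite sA => /dvdnP [q hq].
      have qm : q < m.+1.
        rewrite ltnS /m -(mulnK q d0) -hq; apply: leq_div2r.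
        by rewrite -ltnS ltn_ord.
      have ga : g (Ordinal qm) = a by apply: val_inj; rewrite gv.
      by exists (Ordinal qm); rewrite // inE ga.
    + by case=> x; rewrite inE => hx ->.
  exists B => //; rewrite inE.
  rewrite eA Pg in PA; rewrite eA card_imset // in cA; rewrite eA Sg in sA.
  rewrite PA cA eqxx /=; move: sA => /eqP.
  by rewrite -{2}[d]mul1n eqn_mul2r gtn_eqF.
- case=> B; rewrite inE => /and3P [PB /eqP cB /eqP sB] ->.
  by rewrite Pg card_imset // Sg PB cB sB mul1n !eqxx.
Qed.

Lemma setgcd_bounds n (A : {set 'I_n.+1}) : posset A -> 0 < #|A| -> 0 < setgcd A <= n.
Proof.
move=> PA; rewrite card_gt0 => /set0Pn [a aA].
have a0 : 0 < val a.
  rewrite lt0n; apply/negP => /eqP a0.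
  have : a = ord0 by apply: val_inj.
  by move=> e; move: PA; rewrite /posset -e aA.
have := setgcd_dvd _ _ _ aA => hd.
apply/andP; split.
  rewrite lt0n; apply/negP => /eqP e; move: hd; rewrite e dvd0n; lia.
by rewrite (leq_trans (dvdn_leq a0 hd)) // -ltnS ltn_ord.
Qed.

Definition wt (p d : nat) : nat := if d == 1 then p else if (1 < d < p) then 1 else 0.

Definition Cnt (k p d : nat) : nat :=
  #|[set A : {set 'I_p.+1} | [&& posset A, #|A| == k & setgcd A == d]]|.

Lemma Mbar_nat p k : prime p -> 0 < k -> Mbar k p + fk k 1 = p * fk k p + \sum_(2 <= j < p.+1) fk k (p %/ j).
Proof.
move=> hp k0.
have p1 := prime_gt1 hp.
have step1 : Mbar k p = \sum_(A : {set 'I_p.+1} | posset A && (#|A| == k)) wt p (setgcd A).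
  rewrite /Mbar (eq_bigl (fun A : {set 'I_p.+1} => (posset A && (#|A|==k)) && coprime (setgcd A) p)); last by move=> A; rewrite andbA.
  rewrite big_mkcondr; apply: eq_bigr => A /andP [PA /eqP cA].
  have /andP [s0 sp] := setgcd_bounds _ _ PA (ltac:(by rewrite cA)).
  move: s0 sp; set s := setgcd A => s0 sp.
  rewrite /wt; have [-> | s1] := eqVneq s 1.
    by rewrite coprime1n gcd0n.

  case: (ltnP s p) => sp'.
    have -> : 1 < s by lia.
    rewrite coprime_sym prime_coprime // gtnNdvd //=.
    have : coprime s.-1 p by rewrite coprime_sym prime_coprime // gtnNdvd //; lia.
    by move/eqP.
  have -> : s = p by lia.
  rewrite andbF /coprime gcdnn; case: eqP => //; lia.
rewrite step1 (partition_big (fun A : {set 'I_p.+1} => (inord (setgcd A) : 'I_p.+1)) xpredT) //=.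
have step2 : forall j : 'I_p.+1,
   \sum_(A : {set 'I_p.+1} | (posset A && (#|A| == k)) && (inord (setgcd A) == j)) wt p (setgcd A)
   = Cnt k p j * wt p j.
  move=> j.
  rewrite (eq_bigr (fun _ => wt p j)); last first.
    move=> A /andP [/andP [PA /eqP cA] /eqP e].
    have /andP [s0 sp] := setgcd_bounds _ _ PA (ltac:(by rewrite cA)).
    by rewrite -e inordK.
  rewrite sum_nat_const; congr (_ * _); apply: eq_card => A; rewrite !inE.
  rewrite unfold_in /= -andbA; case PA: (posset A) => //=; case: eqP => //= cA.
  have /andP [s0 sp] := setgcd_bounds _ _ PA (ltac:(by rewrite cA)).
  apply/eqP/eqP => [<- | e]; first by rewrite inordK.
  by apply: val_inj; rewrite /= -e inordK.
rewrite (eq_bigr _ (fun j _ => step2 j)).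
rewrite -(big_mkord xpredT (fun j => Cnt k p j * wt p j)).
rewrite big_ltn // big_ltn; last by lia.
rewrite !big_nat_recr /=; try lia.
have w0 : wt p 0 = 0 by rewrite /wt.
have w1 : wt p 1 = p by rewrite /wt.
have wp : wt p p = 0 by rewrite /wt ltnn andbF; case: eqP => //; lia.
rewrite w0 w1 wp !muln0 add0n addn0 divnn (ltnW p1).
rewrite (eq_big_nat _ _ (F2 := fun j => fk k (p %/ j))); last first.
  move=> j /andP [j2 jp]; rewrite /Cnt count_gcd; last by lia.
  rewrite /wt; case: eqP => [|_]; first by lia.
  by rewrite j2 jp muln1.
rewrite /Cnt count_gcd // divn1 /=; lia.
Qed.


Import GRing.Theory.
Local Open Scope ring_scope.

Theorem mainTheorem6 (p k : nat) (hp : prime p) (hk1 : (1 <= k)%N) (hkp : (k <= p)%N) :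
  (Mbar k p)%:Z =
    (p * fk k p)%:Z - (fk k 1)%:Z + \sum_(2 <= j < p.+1) (fk k (p %/ j))%:Z.
Proof.
have H := Mbar_nat p k hp hk1.
rewrite -(big_morph Posz PoszD (erefl 0%:Z)).
move: H; set S := (\sum_(2 <= j < p.+1) fk k (p %/ j))%N => H.
have := congr1 Posz H; rewrite !PoszD => H'.
lia.
Qed.
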